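(* Let $e$ be an idempotent binary relation on a finite set $Q$ (i.e. $e\circ e=e$), let $S=\{s\in Q\mid (s,s)\in e\}$ be its set of fixed points, and let $\Gamma$ be the set of strongly connected components of the restriction of $e$ to $S$ (viewed as a directed graph). Then: (1) for all $p,q\in Q$, $(p,q)\in e$ if and only if there exists $s\in S$ with $(p,s)\in e$ and $(s,q)\in e$; (2) $e=\ell r$, where $\ell=\{(p,\sigma)\in Q\times\Gamma\mid (p,s)\in e\text{ for some }s\in\sigma\}$ and $r=\{(\sigma,q)\in\Gamma\times Q\mid (s,q)\in e\text{ for some }s\in\sigma\}$.
   Context: Relations are composed as follows: for relations $m\subseteq X\times Y$, $n\subseteq Y\times Z$, $mn=\{(x,z)\mid \exists y,\ (x,y)\in m,\ (y,z)\in n\}$. *)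

(* Defs.v *)
From mathcomp Require Import all_boot.
Set Implicit Arguments. Unset Strict Implicit. Unset Printing Implicit Defensive.

Definition relcomp (X Y Z : Type) (m : X -> Y -> Prop) (n : Y -> Z -> Prop)
  (x : X) (z : Z) : Prop := exists y, m x y /\ n y z.

Section Idem.
Variable Q : finType.
Variable e : rel Q.

Definition idempotent_rel : Prop :=
  forall p q, relcomp e e p q <-> e p q.

Definition fixpts : {set Q} := [set s | e s s].

Definition erestr : rel Q := [rel x y | [&& x \in fixpts, y \in fixpts & e x y]].

Definition scc (s : Q) : {set Q} :=
  [set t in fixpts | connect erestr s t && connect erestr t s].

Definition sccs : {set {set Q}} := [set scc s | s in fixpts].

Definition lrel (p : Q) (sigma : {set Q}) : Prop :=
  sigma \in sccs /\ exists2 s, s \in sigma & e p s.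
Definition rrel (sigma : {set Q}) (q : Q) : Prop :=
  sigma \in sccs /\ exists2 s, s \in sigma & e s q.
End Idem.

(* Main.v *)
Require Import Defs.
From mathcomp Require Import all_boot.

Lemma conn_e (Q : finType) (e : rel Q) :
  (forall a b c, e a b -> e b c -> e a c) ->
  forall x y, connect (erestr e) x y -> x \in fixpts e -> e x y.
Proof.
move=> tr x y /connectP [p Hp ->] {y}.
elim: p x Hp => [|z p IH] x /=.
  by move=> _; rewrite inE.
move=> /andP [/and3P [_ Hz Exz] Hp] _.
exact: tr Exz (IH z Hp Hz).
Qed.

Theorem mainTheorem6 (Q : finType) (e : rel Q) :
  idempotent_rel e ->
  (forall p q : Q, e p q <-> exists2 s, s \in fixpts e & e p s && e s q) /\
  (forall p q : Q, e p q <-> relcomp (lrel e) (rrel e) p q).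
Proof.
move=> Hid.
have tr : forall a b c, e a b -> e b c -> e a c.
  by move=> a b c H1 H2; apply/Hid; exists b.
have P1 : forall p q : Q, e p q <-> exists2 s, s \in fixpts e & e p s && e s q.
  move=> p q; split; last first.
    by move=> [s _ /andP [H1 H2]]; exact: tr H1 H2.
  move=> Epq.
  have [s0 [H1 H2]] : relcomp e e p q by apply/Hid.
  pose A := [pred s | e p s && e s q].
  have As0 : s0 \in A by rewrite inE H1 H2.
  case: (arg_minnP (fun s => #|[set u | e u s]|) As0) => s.
  move=> HA Hmin; move: HA => /andP [Eps Esq].
  have [t [Ept Ets]] : relcomp e e p s by apply/Hid.
  have At : t \in A by rewrite inE Ept (tr _ _ _ Ets Esq).
  have Hsub : [set u | e u t] \subset [set u | e u s].
    by apply/subsetP => u; rewrite !inE => Eut; exact: tr Eut Ets.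
  have Heq : [set u | e u t] = [set u | e u s].
    by apply/eqP; rewrite eqEcard Hsub /= Hmin.
  exists t; first by rewrite inE; have := in_set (fun u => e u t) t; rewrite Heq inE => <-.
  by rewrite Ept (tr _ _ _ Ets Esq).
split=> // p q; split.
  move=> /P1 [s Fs /andP [Eps Esq]].
  have Ss : s \in scc e s.
    by rewrite inE Fs !connect0.
  have Sig : scc e s \in sccs e by apply/imsetP; exists s.
  by exists (scc e s); split=> //; split=> //; exists s.
move=> [sig [[Hsig [s1 S1 Eps1]] [_ [s2 S2 Es2q]]]].
move/imsetP: Hsig => [s0 _ Hs]; subst sig.
move: S1 S2; rewrite !inE => /and3P [F1 C01 C10] /and3P [F2 C02 C20].
have E12 : e s1 s2 by apply: (@conn_e Q e tr _ _ (connect_trans C10 C02)); rewrite inE.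
exact: tr Eps1 (tr _ _ _ E12 Es2q).
Qed.
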